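(* For all integers $m\ge2$ and $p\ge1$, $$E\,|C_m(p;\mathbf U_1)-C_m(p-1;\mathbf U_1)|\le 2+16m.$$
   Context: Let $U_1,U_2,\ldots$ be i.i.d. uniform random variables on $[0,1]$ and $\mathbf U_k=(U_k,U_{k+1},\ldots)$ for $k\ge1$. For integers $m\ge1$, $n\ge0$, $k\ge1$, define $C_m(n;\mathbf U_k)$ recursively (in $n$) by $C_m(n;\mathbf U_k)=0$ for $0\le n\le m-1$, and for $n\ge m$, writing $V=\lfloor nU_k\rfloor$, $$C_m(n;\mathbf U_k)=n-1+C_m(V;\mathbf U_{k+1})+C_{m-1-V}(n-1-V;\mathbf U_{k+1})\,\mathbf 1(V<m-1).$$ (This is the number of comparisons made by Quickselect to find the $m$-th smallest of $n$ distinct numbers.) *)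

(* Defs.v *)
From HB Require Import structures.
From mathcomp Require Import all_boot all_order all_algebra.
From mathcomp Require Import all_classical all_reals all_analysis.
Set Implicit Arguments. Unset Strict Implicit. Unset Printing Implicit Defensive.
Import Order.TTheory GRing.Theory Num.Theory.
Local Open Scope classical_set_scope.
Local Open Scope ring_scope.

Definition mutually_independent {d} {T : measurableType d} {R : realType}
  (P : probability T R) (U : nat -> {RV P >-> R}) : Prop :=
  forall (I : seq nat), uniq I ->
  forall (B : nat -> set R), (forall i, measurable (B i)) ->
  P (\bigcap_(i in [set` I]) (U i @^-1` B i)) =
  (\prod_(i <- I) P (U i @^-1` B i))%E.

Definition uniform01 {d} {T : measurableType d} {R : realType}
  (P : probability T R) (X : {RV P >-> R}) : Prop :=
  forall A : set R, measurable A ->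
  distribution P X A = uniform_prob (@ltr01 R) A.

(* Quickselect comparison count, computed from a realization u of the
   sequence (u k = U_{k+1}, i.e. 0-based indexing), with fuel. *)
Fixpoint Cfuel {R : realType} (fuel m n : nat) (u : nat -> R) (k : nat) : R :=
  match fuel with
  | 0 => 0
  | f.+1 =>
    if (n < m)%N then 0 else
    let V := minn (Num.truncn (n%:R * u k)) n.-1 in
    (n%:R - 1) + Cfuel f m V u k.+1
      + (if (V < m.-1)%N then Cfuel f (m.-1 - V) (n.-1 - V) u k.+1 else 0)
  end.

(* C_m(n; U_{k+1}) (0-based k); fuel n.+1 suffices since n strictly decreases. *)
Definition Cqs {R : realType} (m n : nat) (u : nat -> R) (k : nat) : R :=
  Cfuel n.+1 m n u k.

(* Main.v *)
Require Import Defs.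
From HB Require Import structures.
From mathcomp Require Import all_boot all_order all_algebra.
From mathcomp Require Import all_classical all_reals all_analysis.
From mathcomp Require Import ring lra zify.
Import Order.TTheory GRing.Theory Num.Theory.
Local Open Scope classical_set_scope.
Local Open Scope ring_scope.

Section Unif.
Variable R : realType.

Lemma Leb_squeeze (S : set R) (lo hi : R) : measurable S -> 0 <= lo -> lo <= hi -> hi <= 1 ->
  (forall x, 0 <= x <= 1 -> lo <= x < hi -> S x) ->
  (forall x, 0 <= x <= 1 -> S x -> lo <= x <= hi) ->
  lebesgue_measure (S `&` `[0%R, 1%R]) = (hi - lo)%:E.
Proof.
move=> mS l0 lh h1 H1 H2.
have m01 : measurable (S `&` `[0%R, 1%R]) by apply: measurableI.
apply/le_anti/andP; split.
  apply: (@le_trans _ _ (lebesgue_measure (`[lo, hi] : set R))).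
    apply: le_measure => //; rewrite ?inE //.
    move=> x [Sx]; rewrite /= in_itv /= => x01.
    by rewrite in_itv /=; apply: H2.
  rewrite lebesgue_measure_itv /= lte_fin.
  by case: ifP => // _; rewrite lee_fin subr_ge0.
apply: (@le_trans _ _ (lebesgue_measure (`[lo, hi[ : set R))).
  rewrite lebesgue_measure_itv /= lte_fin.
  case: ifP => lth //.
  have -> : hi = lo by apply/le_anti; rewrite lh leNgt lth.
  by rewrite subrr lee_fin.
apply: le_measure => //; rewrite ?inE //.
move=> x; rewrite /= in_itv /= => /andP [lx xh]; split.
  apply: H1 => //; last by rewrite lx xh.
  by rewrite (le_trans l0 lx) /= ltW // (lt_le_trans xh h1).
by rewrite in_itv /= (le_trans l0 lx) /= ltW // (lt_le_trans xh h1).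
Qed.

End Unif.

Section UnifP.
Variables (d : measure_display) (T : measurableType d) (R : realType)
  (P : probability T R) (U : nat -> {RV P >-> R}).

Lemma unif_Leb k (S : set R) : uniform01 (U k) -> measurable S ->
  P (U k @^-1` S) = lebesgue_measure (S `&` `[0%R, 1%R]).
Proof.
move=> H mS; have := H S mS; rewrite /distribution /pushforward => ->.
rewrite /uniform_prob integral_uniform_pdf.
rewrite (eq_integral (fun=> 1%:E)); last first.
  move=> x; rewrite inE /= in_itv /= => -[_ x01].
  by rewrite /uniform_pdf x01 subr0 invr1.
by rewrite integral_cst ?mul1e //; apply: measurableI.
Qed.

End UnifP.

Section QS.
Variable R : realType.

Definition Vf (n : nat) (x : R) : nat := minn (Num.truncn (n%:R * x)) n.-1.

Lemma Vf_le_n n x : (Vf n x <= n.-1)%N.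
Proof. exact: geq_minr. Qed.

Lemma Vf_ge n x t : (t <= n.-1)%N ->
  (t <= Vf n x)%N = (t == 0%N) || (t%:R <= n%:R * x).
Proof.
move=> tn; rewrite /Vf leq_min tn andbT.
case: t tn => [|t] tn //=.
by rewrite truncn_gt_nat.
Qed.

Lemma Vf_le n x t : (t < n.-1)%N -> (Vf n x <= t)%N = (n%:R * x < t.+1%:R).
Proof.
move=> tn; rewrite /Vf geq_min truncn_le_nat.
by rewrite (leqNgt n.-1 t) tn orbF.
Qed.

Lemma Cfuel_eq (u : nat -> R) f m n k : Cfuel f.+1 m n u k =
  if (n < m)%N then 0 else
    (n%:R - 1) + Cfuel f m (Vf n (u k)) u k.+1
      + (if (Vf n (u k) < m.-1)%N then Cfuel f (m.-1 - Vf n (u k)) (n.-1 - Vf n (u k)) u k.+1 else 0).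
Proof. by []. Qed.

Lemma Cfuel_S (u : nat -> R) f : forall m n k, (1 <= m)%N -> (n < f)%N ->
  Cfuel f.+1 m n u k = Cfuel f m n u k.
Proof.
elim: f => [//|f IH] m n k m1 nf.
rewrite Cfuel_eq [RHS]Cfuel_eq; case: ltnP => // mn.
have n1 : (1 <= n)%N by apply: leq_trans mn.
set V := Vf n (u k).
have Vn : (V <= n.-1)%N by exact: geq_minr.
rewrite IH //; last by apply: leq_ltn_trans Vn _; rewrite -ltnS prednK.
case: ifP => // Vm; rewrite IH //; first by rewrite subn_gt0.
apply: leq_ltn_trans (leq_subr _ _) _.
by rewrite -ltnS prednK.
Qed.

Lemma Cfuel_Cqs (u : nat -> R) f m n k : (1 <= m)%N -> (n < f)%N ->
  Cfuel f m n u k = Cqs m n u k.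
Proof.
move=> m1; elim: f => [//|f IH] nf.
case: (ltngtP n f) => [nf'|//|->]; last by [].
  by rewrite Cfuel_S // IH.
by move: nf; rewrite ltnS leqNgt => /negP.
Qed.

Lemma Cqs_small m n (u : nat -> R) k : (n < m)%N -> Cqs m n u k = 0.
Proof. by move=> nm; rewrite /Cqs Cfuel_eq nm. Qed.

Lemma Cqs_unfold m n (u : nat -> R) k : (1 <= m)%N -> (m <= n)%N ->
  Cqs m n u k = (n%:R - 1) + Cqs m (Vf n (u k)) u k.+1 +
    (if (Vf n (u k) < m.-1)%N then Cqs (m.-1 - Vf n (u k)) (n.-1 - Vf n (u k)) u k.+1
     else 0).
Proof.
move=> m1 mn.
have n1 : (1 <= n)%N by apply: leq_trans mn.
have Vn : (Vf n (u k) < n)%N.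
  by apply: leq_ltn_trans (Vf_le_n _ _) _; rewrite -ltnS prednK.
rewrite /Cqs Cfuel_eq ltnNge mn /= Cfuel_Cqs //.
case: ifP => // Vm; rewrite Cfuel_Cqs //; first by rewrite subn_gt0.
apply: leq_ltn_trans (leq_subr _ _) _.
by rewrite -ltnS prednK.
Qed.

Lemma Cqs_ge0 m n (u : nat -> R) k : (1 <= m)%N -> 0 <= Cqs m n u k.
Proof.
elim/ltn_ind: n m k => n IH m k m1.
case: (ltnP n m) => mn; first by rewrite Cqs_small.
have n1 : (1 <= n)%N by apply: leq_trans mn.
have Vn : (Vf n (u k) < n)%N.
  by apply: leq_ltn_trans (Vf_le_n _ _) _; rewrite -ltnS prednK.
rewrite Cqs_unfold //; apply: addr_ge0; first apply: addr_ge0.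
- by rewrite subr_ge0 ler1n.
- exact: IH.
case: ifP => // Vm; apply: IH; last by rewrite subn_gt0.
apply: leq_ltn_trans (leq_subr _ _) _.
by rewrite -ltnS prednK.
Qed.

End QS.
Arguments Vf {R} n x.
Arguments Vf_le_n {R} n x.
Arguments Vf_ge {R} n x t.
Arguments Vf_le {R} n x t.
Arguments Cqs_unfold {R} m n u k.
Arguments Cqs_small {R} m n u k.
Arguments Cqs_ge0 {R} m n u k.

Section Num.
Variable R : realFieldType.

Definition sq0 (A B : R) := B - A.
Definition sq1 (A B : R) := (B * (B - 1) - A * (A - 1)) / 2.
Definition sq2 (A B : R) := ((B - 1) * B * (2 * B - 1) - (A - 1) * A * (2 * A - 1)) / 6.

Lemma sum_quad (a b : nat) (c0 c1 c2 : R) (F : nat -> R) : (a <= b)%N ->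
  (forall v, (a <= v < b)%N -> F v = c0 + c1 * v%:R + c2 * v%:R ^+ 2) ->
  \sum_(a <= v < b) F v =
  c0 * sq0 a%:R b%:R + c1 * sq1 a%:R b%:R + c2 * sq2 a%:R b%:R.
Proof.
move=> ab HF; elim: b ab HF => [|b IH] ab HF.
  have a0 : a = 0%N by lia.
  by rewrite a0 big_geq // /sq0 /sq1 /sq2; field.
case: (leqP a b) => ab'.
  rewrite big_nat_recr //= IH //; last by move=> v /andP [av vb]; apply: HF; lia.
  rewrite HF; last by lia.
  rewrite /sq0 /sq1 /sq2 -natr1; field.
  by [].
have -> : a = b.+1 by lia.
by rewrite big_geq // /sq0 /sq1 /sq2; field.
Qed.


Lemma num1 (n m : nat) : (1 <= m)%N -> (m <= n)%N ->
  \sum_(0 <= v < n) ((n%:R : R)^-1 * ((n%:R - 1)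
     + (if (m <= v)%N then 4 * v%:R else 0)
     + (if (v < m.-1)%N then 4 * (n%:R - 1 - v%:R) else 0))) <= 4 * n%:R.
Proof.
move=> m1 mn.
have N0 : (0 : R) < n%:R by rewrite ltr0n; lia.
rewrite -mulr_sumr (ler_pdivrMl _ _ N0).
have h1 : (m.-1 <= n)%N by lia.
have h2 : (m.-1 <= m)%N by lia.
rewrite (big_cat_nat (leq0n m.-1) h1) (big_cat_nat h2 mn) /=.
rewrite (@sum_quad _ _ (5 * (n%:R - 1)) (-4) 0); first last.
- move=> v /andP [_ vm].
  have -> : (m <= v)%N = false by lia.
  by rewrite vm /=; ring.
- by [].
rewrite (@sum_quad _ _ (n%:R - 1) 0 0); first last.
- move=> v /andP [v1 vm].
  have -> : (m <= v)%N = false by lia.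
  have -> : (v < m.-1)%N = false by lia.
  by rewrite /=; ring.
- by [].
rewrite (@sum_quad _ _ (n%:R - 1) 4 0); first last.
- move=> v /andP [v1 vm].
  have -> : (v < m.-1)%N = false by lia.
  by rewrite v1 /=; ring.
- by [].
have M1 : (m.-1%:R : R) = m%:R - 1 by rewrite -subn1 natrB.
rewrite M1 /sq0 /sq1 /sq2.
have mN : (m%:R : R) <= n%:R by rewrite ler_nat.
have m1' : (1 : R) <= m%:R by rewrite ler1n.
have hs : 0 <= (n%:R - 2 * m%:R) ^+ 2 :> R by rewrite sqr_ge0.
nra.
Qed.


Definition p2 n (i : nat * bool) : R :=
  if i.2 then (n.-1 - i.1)%:R / (n%:R * n.-1%:R) else i.1%:R / (n%:R * n.-1%:R).

Definition b2 (n j : nat) (i : nat * bool) : R :=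
  if i.2 then 1 + (if (i.1 < j.-1)%N then 2 + 16 * (j.-1 - i.1)%:R else 0)
  else 1 + (if (j.+1 <= i.1)%N then 2 + 16 * j%:R
            else if i.1 == j then 4 * j%:R
            else if i.1 == j.-1 then 4 * (n - j)%:R
            else 8 * (n.-1 - i.1)%:R).

Lemma num2 (n j : nat) : (1 <= j)%N -> (j.+1 <= n)%N ->
  \sum_(0 <= v < n) (p2 n (v, true) * b2 n j (v, true) +
                     (p2 n (v, false) * b2 n j (v, false) + 0)) <= 2 + 16 * j%:R.
Proof.
move=> j1 jn.
have N0 : (0 : R) < n%:R by rewrite ltr0n; lia.
have M0 : (0 : R) < n.-1%:R by rewrite ltr0n; lia.
have D0 : (0 : R) < n%:R * n.-1%:R by rewrite mulr_gt0.
have NM : (n.-1%:R : R) = n%:R - 1 by rewrite -subn1 natrB //; lia.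
have JM : (j.-1%:R : R) = j%:R - 1 by rewrite -subn1 natrB //; lia.
pose g v := ((n.-1 - v)%:R * b2 n j (v, true) + v%:R * b2 n j (v, false) : R).
rewrite (eq_bigr (fun v => (n%:R * n.-1%:R)^-1 * g v)); last first.
  by move=> v _; rewrite /p2 /g /=; ring.
rewrite -mulr_sumr (ler_pdivrMl _ _ D0).
have h1 : (j.-1 <= j)%N by lia.
have h2 : (j <= j.+1)%N by lia.
rewrite (big_cat_nat (leq0n j.-1) (leq_trans h1 (leq_trans h2 jn))).
rewrite (big_cat_nat h1 (leq_trans h2 jn)) (big_cat_nat h2 jn) /=.
rewrite (@sum_quad _ _ ((n%:R - 1) * (16 * j%:R - 13)) (22 - 16 * j%:R - 8 * n%:R) 8);
  first last.
- move=> v /andP [_ vm]; rewrite /g /b2 /=.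
  have -> : (j.+1 <= v)%N = false by lia.
  have -> : (v == j) = false by apply/eqP; lia.
  have -> : (v == j.-1) = false by apply/eqP; lia.
  rewrite vm natrB; last by lia.
  rewrite natrB; last by lia.
  rewrite NM JM; ring.
- by [].
rewrite (@sum_quad _ _ (n%:R - 1) (4 * (n%:R - j%:R)) 0); first last.
- move=> v /andP [v1 vm]; rewrite /g /b2 /=.
  have ev : v = j.-1 by lia.
  rewrite ev ltnn.
  have -> : (j.+1 <= j.-1)%N = false by lia.
  have -> : (j.-1 == j) = false by apply/eqP; lia.
  rewrite eqxx natrB; last by lia.
  rewrite natrB; last by lia.
  rewrite NM JM; ring.
- by [].
rewrite (@sum_quad _ _ (n%:R - 1) (4 * j%:R) 0); first last.
- move=> v /andP [v1 vm]; rewrite /g /b2 /=.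
  have ev : v = j by lia.
  rewrite ev.
  have -> : (j < j.-1)%N = false by lia.
  have -> : (j.+1 <= j)%N = false by lia.
  rewrite eqxx natrB; last by lia.
  rewrite NM; ring.
- by [].
rewrite (@sum_quad _ _ (n%:R - 1) (2 + 16 * j%:R) 0); first last.
- move=> v /andP [v1 vm]; rewrite /g /b2 /=.
  have -> : (v < j.-1)%N = false by lia.
  rewrite v1 natrB; last by lia.
  rewrite NM; ring.
- by [].
have J1e : (j.+1%:R : R) = j%:R + 1 by rewrite natr1.
rewrite /sq0 /sq1 /sq2 JM NM J1e.
set J := (j%:R : R); set N := (n%:R : R).
have J1 : 1 <= J by rewrite /J ler1n.
have JN : J + 1 <= N by rewrite /J /N natr1 ler_nat.
set a := J - 1; set t := N - J - 1.
have a0 : 0 <= a by rewrite /a subr_ge0.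
have t0 : 0 <= t by rewrite /t; lra.
have eJ : J = a + 1 by rewrite /a; ring.
have eN : N = a + t + 2 by rewrite /t /a; ring.
rewrite eN eJ.
have h_aa := mulr_ge0 a0 a0.
have h_at := mulr_ge0 a0 t0.
have h_tt := mulr_ge0 t0 t0.
have h_aaa := mulr_ge0 h_aa a0.
have h_aat := mulr_ge0 h_aa t0.
have h_att := mulr_ge0 h_at t0.
have h_ttt := mulr_ge0 h_tt t0.
lra.
Qed.

End Num.
Arguments p2 {R} n i.
Arguments b2 {R} n j i.
Arguments num1 {R} n m.
Arguments num2 {R} n j.

Section Pieces.
Variable R : realType.

Definition bset (la : bool) (a c : R) (hb : bool) (b c' : R) : set R :=
  [set x : R | (la || (a <= c * x)) && (hb || (c' * x < b))].

Lemma meas_bset la a c hb b c' : measurable (bset la a c hb b c').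
Proof.
have H : measurable_fun setT
  (fun x : R => (la || (a <= c * x)) && (hb || (c' * x < b))).
  apply: measurable_and; apply: measurable_or; try exact: measurable_cst.
    apply: measurable_realfun.measurable_fun_ler; first exact: measurable_cst.
    by apply: measurable_realfun.measurable_funM => //; exact: measurable_cst.
  apply: measurable_realfun.measurable_fun_ltr; last exact: measurable_cst.
  by apply: measurable_realfun.measurable_funM => //; exact: measurable_cst.
have := H measurableT [set true] I; rewrite setTI.
by congr measurable; apply/seteqP; split => x /=.
Qed.

Lemma Vf_pre n v : (0 < n)%N -> (v < n)%N ->
  @Vf R n @^-1` [set v] = bset (v == 0%N) v%:R n%:R (v == n.-1) v.+1%:R n%:R.
Proof.
move=> n0 vn; apply/seteqP; split => x; rewrite /bset /=.
  move=> <-; rewrite -Vf_ge ?Vf_le_n // leqnn /=.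
  case: eqP => //= /eqP Vn; rewrite -Vf_le //.
  by rewrite ltn_neqAle Vn Vf_le_n.
have vn1 : (v <= n.-1)%N by rewrite -ltnS prednK.
move=> /andP [H1 H2]; apply/eqP; rewrite eqn_leq; apply/andP; split.
  move: H2; case: eqP => [->|/eqP vn2] /= H2; first exact: Vf_le_n.
  by rewrite Vf_le // ltn_neqAle vn2 vn1.
by rewrite Vf_ge.
Qed.

Lemma Vf_meas n v : (0 < n)%N -> measurable (@Vf R n @^-1` [set v]).
Proof.
move=> n0; case: (ltnP v n) => vn; first by rewrite Vf_pre //; exact: meas_bset.
have -> : @Vf R n @^-1` [set v] = set0; last exact: measurable0.
apply/seteqP; split => x //= Vx; move: (Vf_le_n n x); rewrite Vx.
by rewrite -ltnS prednK // ltnNge vn.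
Qed.

End Pieces.
Arguments bset {R} la a c hb b c'.
Arguments meas_bset {R} la a c hb b c'.

Section Pair.
Variable R : realType.

Lemma natr_pred_ n : (1 <= n)%N -> (n.-1%:R : R) = n%:R - 1.
Proof. by move=> n1; rewrite -subn1 natrB. Qed.
End Pair.
Arguments natr_pred_ {R} n.
Section Pair2.
Variable R : realType.
Lemma natr_pred n : (1 <= n)%N -> (n.-1%:R : R) = n%:R - 1.
Proof. exact: natr_pred_. Qed.

Lemma Vf_pair n (x : R) : (2 <= n)%N ->
  (Vf n.-1 x <= Vf n x)%N && (Vf n x <= (Vf n.-1 x).+1)%N.
Proof.
move=> n2; have n1 : (1 <= n)%N by apply: ltnW.
have M := natr_pred n n1.
have ha := Vf_le_n n x; have hb := Vf_le_n n.-1 x.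
apply/andP; split.
  rewrite leqNgt; apply/negP => ab.
  have abn : (Vf n x < n.-1)%N.
    lia.
  have H1 : ((Vf n x).+1 <= Vf n.-1 x)%N by [].
  rewrite Vf_ge in H1; last by lia.
  have H2 := leqnn (Vf n x); rewrite Vf_le // in H2.
  move: H1 H2; rewrite /= M -!natr1 => H1 H2.
  have a0 : (0:R) <= (Vf n x)%:R by rewrite ler0n.
  have N2 : (2:R) <= n%:R by rewrite (ler_nat R 2).
  nra.
rewrite leqNgt; apply/negP => ba.
have H1 : ((Vf n.-1 x).+2 <= Vf n x)%N by [].
have bn : ((Vf n.-1 x).+2 <= n.-1)%N by apply: leq_trans ha.
rewrite Vf_ge // in H1.
have H2 := leqnn (Vf n.-1 x); rewrite Vf_le in H2; last first.
  lia.
have Hb : ((Vf n.-1 x).+2%:R : R) <= n.-1%:R by rewrite ler_nat.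
move: H1 H2 Hb; rewrite /= M -!natr1 => H1 H2 Hb.
have b0 : (0:R) <= (Vf n.-1 x)%:R by rewrite ler0n.
nra.
Qed.


Definition g2 n (x : R) : nat * bool := (Vf n x, Vf n.-1 x == Vf n x).

Lemma g2_pre_t n v : (2 <= n)%N -> (v <= n.-2)%N ->
  g2 n @^-1` [set (v, true)] = bset (v == 0%N) v%:R n.-1%:R false v.+1%:R n%:R.
Proof.
move=> n2 vn; have hp x := @Vf_pair n x n2.
apply/seteqP; split => x; rewrite /= /g2 /bset /=.
  case=> av /eqP ba; rewrite -Vf_ge; last by lia.
  rewrite -Vf_le; last by lia.
  by rewrite ba av leqnn.
move=> /andP [H1 H2]; rewrite -Vf_ge in H1; last by lia.
rewrite -Vf_le in H2; last by lia.
have /andP [h1 h2] := hp x.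
have e1 : Vf n x = v by apply/eqP; rewrite eqn_leq H2 (leq_trans H1 h1).
have e2 : Vf n.-1 x = v by apply/eqP; rewrite eqn_leq H1 -e1 h1.
by rewrite e1 e2 eqxx.
Qed.

Lemma g2_pre_t0 n v : (2 <= n)%N -> (n.-2 < v)%N -> g2 n @^-1` [set (v, true)] = set0.
Proof.
move=> n2 vn; apply/seteqP; split => x //; rewrite /= /g2.
case=> av /eqP ba; have := Vf_le_n n.-1 x; rewrite ba av; lia.
Qed.

Lemma g2_pre_f n v : (2 <= n)%N -> (1 <= v)%N -> (v <= n.-1)%N ->
  g2 n @^-1` [set (v, false)] = bset false v%:R n%:R (v == n.-1) v%:R n.-1%:R.
Proof.
move=> n2 v1 vn; have hp x := @Vf_pair n x n2.
apply/seteqP; split => x; rewrite /= /g2 /bset /=.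
  case=> av /eqP ba; have /andP [h1 h2] := hp x.
  have H1 : (v <= Vf n x)%N by rewrite av.
  rewrite Vf_ge // in H1; move: H1; case: eqP => [v0|_] /= H1; first by lia.
  rewrite H1 /=.
  case: eqP => //= /eqP vn1.
  have H2 : (Vf n.-1 x <= v.-1)%N by lia.
  by rewrite Vf_le ?prednK // in H2; lia.
move=> /andP [H1 H2].
have H1' : (v <= Vf n x)%N by rewrite Vf_ge // H1 orbT.
have /andP [h1 h2] := hp x.
have H2' : (Vf n.-1 x < v)%N.
  move: H2; case: eqP => [->|/eqP vn1] /= H2; first by have := Vf_le_n n.-1 x; lia.
  have : (Vf n.-1 x <= v.-1)%N by rewrite Vf_le ?prednK //; lia.
  lia.
have e1 : Vf n x = v by lia.
by rewrite e1; congr pair; apply/eqP; lia.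
Qed.

Lemma g2_pre_f0 n v : (2 <= n)%N -> (v == 0%N) || (n <= v)%N ->
  g2 n @^-1` [set (v, false)] = set0.
Proof.
move=> n2 vn; apply/seteqP; split => x //; rewrite /= /g2.
case=> av /eqP ba; have /andP [h1 h2] := @Vf_pair n x n2.
have := Vf_le_n n x; lia.
Qed.

Lemma g2_meas n i : (2 <= n)%N -> measurable (g2 n @^-1` [set i]).
Proof.
move=> n2; case: i => v [].
  case: (leqP v n.-2) => vn; first by rewrite g2_pre_t //; exact: meas_bset.
  by rewrite g2_pre_t0.
case: (boolP ((v == 0%N) || (n <= v)%N)) => vn; first by rewrite g2_pre_f0.
rewrite g2_pre_f //; [exact: meas_bset| lia | lia].
Qed.

Lemma le_divs (a b c e : R) : 0 < a -> 0 < c ->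
  (a^-1 * b <= c^-1 * e) = (c * b <= a * e).
Proof.
move=> a0 c0; rewrite (ler_pdivrMl _ _ a0) mulrCA (ler_pdivlMl _ _ c0).
by [].
Qed.

End Pair2.
Arguments g2 {R} n x.


Lemma bigsetU_seqP (T0 : Type) (I0 : eqType) (s : seq I0) (F : I0 -> set T0) x :
  (\big[setU/set0]_(i <- s) F i) x <-> exists i, i \in s /\ F i x.
Proof.
elim: s => [|a s IH]; first by rewrite big_nil; split => // -[i []].
rewrite big_cons; split.
  case=> [Fa|/IH [i [si Fi]]]; first by exists a; rewrite mem_head.
  by exists i; rewrite in_cons si orbT.
case=> i []; rewrite in_cons => /orP [/eqP -> Fa|si Fi]; first by left.
by right; apply/IH; exists i.
Qed.

Section Main.
Variables (d : measure_display) (T : measurableType d) (R : realType)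
  (P : probability T R) (U : nat -> {RV P >-> R}).
Hypothesis indep : mutually_independent U.
Hypothesis unif : forall i, uniform01 (U i).


Definition Ev (I : seq nat) (B : nat -> set R) : set T :=
  \bigcap_(i in [set` I]) (U i @^-1` B i).

Lemma Ev_meas I B : (forall i, measurable (B i)) -> measurable (Ev I B).
Proof.
move=> mB; apply: bigcap_measurableType => i _.
exact: measurable_funPTI.
Qed.

Definition Good k (c : R) (X : T -> R) :=
  [/\ measurable_fun setT X, (forall w, 0 <= X w) &
   forall I B, uniq I -> (forall i, measurable (B i)) -> all (fun i => (i < k)%N) I ->
     (\int[P]_(w in Ev I B) (X w)%:E <= P (Ev I B) * c%:E)%E].

Definition Bupd (B : nat -> set R) k (J : set R) := fun i => if i == k then J else B i.

Lemma Ev_cons k I B J : all (fun i => (i < k)%N) I ->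
  Ev I B `&` (U k @^-1` J) = Ev (k :: I) (Bupd B k J).
Proof.
move=> aI; apply/seteqP; split => w.
  move=> [EvI Jk] i /= ; rewrite in_cons => /orP [/eqP ->|iI].
    by rewrite /Bupd eqxx.
  rewrite /Bupd; have: (i < k)%N by move/allP: aI => /(_ i iI).
  by rewrite ltn_neqAle => /andP [/negbTE -> _]; apply: EvI.
move=> H; split.
  move=> i /= iI; have := H i; rewrite /= in_cons iI orbT => /(_ isT).
  have: (i < k)%N by move/allP: aI => /(_ i iI).
  by rewrite /Bupd ltn_neqAle => /andP [/negbTE -> _].
by have := H k; rewrite /= mem_head /Bupd eqxx => /(_ isT).
Qed.

Lemma P_Ev_cons k I B J : uniq I -> (forall i, measurable (B i)) -> measurable J ->
  all (fun i => (i < k)%N) I ->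
  P (Ev (k :: I) (Bupd B k J)) = (P (U k @^-1` J) * P (Ev I B))%E.
Proof.
move=> uI mB mJ aI.
have kI : k \notin I.
  by apply/negP => /(allP aI); rewrite ltnn.
have mB' : forall i, measurable (Bupd B k J i).
  by move=> i; rewrite /Bupd; case: ifP.
rewrite /Ev indep /= ?kI ?uI // big_cons /Bupd eqxx indep //.
congr (_ * _)%E; rewrite big_seq_cond [RHS]big_seq_cond; apply: eq_bigr => i /andP [iI _].
have: (i < k)%N by move/allP: aI => /(_ i iI).
by rewrite ltn_neqAle => /andP [/negbTE -> _].
Qed.

Lemma Good_meas k (c : R) (X : T -> R) : Good k c X -> measurable_fun setT X.
Proof. by case. Qed.
Lemma Good_ge0 k (c : R) (X : T -> R) : Good k c X -> forall w, 0 <= X w.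
Proof. by case. Qed.

Lemma Good_const k (c : R) : 0 <= c -> Good k c (fun _ => c).
Proof.
move=> c0; split => // I B uI mB aI.
rewrite integral_cst //; last exact: Ev_meas.
by rewrite muleC.
Qed.

Lemma Good_mono k (c c' : R) (X : T -> R) : c <= c' -> Good k c X -> Good k c' X.
Proof.
move=> cc [mX X0 H]; split => // I B uI mB aI.
apply: le_trans (H I B uI mB aI) _.
by apply: lee_wpmul2l => //; rewrite lee_fin.
Qed.

Lemma Good_le k (c : R) (X Y : T -> R) : measurable_fun setT X -> (forall w, 0 <= X w) ->
  (forall w, X w <= Y w) -> Good k c Y -> Good k c X.
Proof.
move=> mX X0 XY [mY Y0 H]; split => // I B uI mB aI.
apply: le_trans (H I B uI mB aI).
apply: ge0_le_integral => //.
- exact: Ev_meas.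
- by move=> w _; rewrite lee_fin.
- by apply/measurable_realfun.measurable_EFinP; apply: measurable_funS mX.
- by apply/measurable_realfun.measurable_EFinP; apply: measurable_funS mY.
- by move=> w _; rewrite lee_fin.
Qed.

Lemma Good_add k (a b : R) (X Y : T -> R) : Good k a X -> Good k b Y -> Good k (a + b) (fun w => X w + Y w).
Proof.
move=> [mX X0 HX] [mY Y0 HY]; split.
- exact: measurable_realfun.measurable_funD.
- by move=> w; rewrite addr_ge0.
move=> I B uI mB aI.
under eq_integral do rewrite EFinD.
rewrite ge0_integralD //.
- have fA : P (Ev I B) \is a fin_num by apply: fin_num_measure; exact: Ev_meas.
  rewrite EFinD muleDr //; exact: leeD (HX I B uI mB aI) (HY I B uI mB aI).
- exact: Ev_meas.
- by move=> w _; rewrite lee_fin.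
- by apply/measurable_realfun.measurable_EFinP; apply: measurable_funS mX.
- by move=> w _; rewrite lee_fin.
- by apply/measurable_realfun.measurable_EFinP; apply: measurable_funS mY.
Qed.

Lemma Good_part (I0 : eqType) (s : seq I0) (g : R -> I0) k (X : T -> R)
  (Xi : I0 -> T -> R) (p b : I0 -> R) :
  uniq s -> (forall x, g x \in s) -> (forall i, measurable (g @^-1` [set i])) ->
  (forall i, i \in s -> P (U k @^-1` (g @^-1` [set i])) = (p i)%:E) ->
  measurable_fun setT X -> (forall w, 0 <= X w) ->
  (forall w, X w <= Xi (g (U k w)) w) ->
  (forall i, i \in s -> Good k.+1 (b i) (Xi i)) ->
  Good k (\sum_(i <- s) p i * b i) X.
Proof.
move=> us gs mg Pg mX X0 XXi GXi; split => // I B uI mB aI.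
set A := Ev I B.
have mA : measurable A by exact: Ev_meas.
pose F i := A `&` U k @^-1` (g @^-1` [set i]).
have mF i : measurable (F i) by apply: measurableI => //; exact: measurable_funPTI.
have AF : A = \big[setU/set0]_(i <- s) F i.
  apply/seteqP; split => w.
    by move=> Aw; apply/bigsetU_seqP; exists (g (U k w)); split.
  by move=> /bigsetU_seqP [i [_ []]].
have tF : trivIset [set` s] F.
  apply/trivIsetP => i j _ _ ij; apply/seteqP; split => // w [[_ gi] [_ gj]].
  by move/eqP: ij; apply; rewrite -gi -gj.
have fA : P A \is a fin_num by apply: fin_num_measure.
rewrite [X in (\int[P]_(w in X) _)%E]AF ge0_integral_bigsetU //; first last.
- by move=> w _; rewrite lee_fin.
- by apply/measurable_realfun.measurable_EFinP; apply: measurable_funS mX.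
apply: (@le_trans _ _ (\sum_(i <- s) ((p i * fine (P A) * b i)%:E))%E).
  rewrite big_seq [X in (_ <= X)%E]big_seq; apply: lee_sum => i si.
  have [mXi Xi0 H] := GXi i si.
  apply: (@le_trans _ _ (\int[P]_(w in F i) (Xi i w)%:E)%E).
    apply: ge0_le_integral => //.
    - by move=> w _; rewrite lee_fin.
    - by apply/measurable_realfun.measurable_EFinP; apply: measurable_funS mX.
    - by apply/measurable_realfun.measurable_EFinP; apply: measurable_funS mXi.
    - by move=> w [_ /= <-]; rewrite lee_fin.
  have kI : k \notin I by apply/negP => /(allP aI); rewrite ltnn.
  have mB' : forall j, measurable (Bupd B k (g @^-1` [set i]) j).
    by move=> j; rewrite /Bupd; case: ifP.
  rewrite /F /A Ev_cons //.
  apply: le_trans (H _ _ _ mB' _) _.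
  - by rewrite /= kI uI.
  - rewrite /= ltnSn /=; apply: sub_all aI => j /= jk; exact: ltnW.
  rewrite P_Ev_cons // Pg // -(fineK fA) -!EFinM //.
rewrite sumEFin -(fineK fA) -EFinM lee_fin mulr_sumr le_eqVlt; apply/orP; left.
apply/eqP; apply: eq_bigr => i _.
by rewrite mulrCA mulrA.
Qed.


Lemma P_Vf k n v : uniform01 (U k) -> (0 < n)%N -> (v < n)%N ->
  P (U k @^-1` (@Vf R n @^-1` [set v])) = ((n%:R : R)^-1)%:E.
Proof.
move=> Hu n0 vn.
have N0 : (0 : R) < n%:R by rewrite ltr0n.
rewrite Vf_pre // unif_Leb //; last exact: meas_bset.
rewrite (@Leb_squeeze _ _ ((n%:R)^-1 * v%:R) ((n%:R)^-1 * v.+1%:R)).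
- by congr EFin; ring.
- exact: meas_bset.
- by rewrite mulr_ge0 // invr_ge0 ltW.
- by rewrite ler_wpM2l ?invr_ge0 ?ler_nat // ltW.
- by rewrite (ler_pdivrMl _ _ N0) mulr1 ler_nat.
- move=> x _ /andP [lx xh]; rewrite /bset /=.
  by rewrite -(ler_pdivrMl _ _ N0) lx orbT -(ltr_pdivlMl _ _ N0) xh orbT.
move=> x /andP [x0 x1]; rewrite /bset /= => /andP [H1 H2]; apply/andP; split.
  move: H1; case: eqP => [->|_] /= H1; first by rewrite mulr0.
  by rewrite (ler_pdivrMl _ _ N0).
move: H2; case: eqP => [->|_] /= H2.
  by rewrite prednK // (ler_pdivlMl _ _ N0) ler_piMr // ltW.
by rewrite (ler_pdivlMl _ _ N0) ltW.
Qed.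


Lemma P_g2 k n i : uniform01 (U k) -> (2 <= n)%N -> (i.1 < n)%N ->
  P (U k @^-1` (g2 n @^-1` [set i])) = (p2 n i)%:E.
Proof.
move=> Hu n2; case: i => v e /= vn.
have n1 : (1 <= n)%N by apply: ltnW.
have N0 : (0 : R) < n%:R by rewrite ltr0n.
have M0 : (0 : R) < n.-1%:R by rewrite ltr0n; lia.
have M := @natr_pred R n n1.
have v0 : (0:R) <= v%:R by rewrite ler0n.
rewrite /p2 /=; case: e.
  case: (leqP v n.-2) => vn2; last first.
    rewrite g2_pre_t0 // preimage_set0 measure0.
    have -> : (n.-1 - v = 0)%N by lia.
    by rewrite mul0r.
  rewrite g2_pre_t // unif_Leb //; last exact: meas_bset.
  have vM : (v.+1%:R : R) <= n.-1%:R by rewrite ler_nat; lia.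
  rewrite (@Leb_squeeze _ _ ((n.-1%:R)^-1 * v%:R) ((n%:R)^-1 * v.+1%:R)).
  - congr EFin; rewrite natrB; last by lia.
    rewrite M -natr1; field.
    by rewrite -M !gt_eqF.
  - exact: meas_bset.
  - by rewrite mulr_ge0 // invr_ge0 ltW.
  - rewrite le_divs //; move: vM; rewrite M -!natr1 => vM; nra.
  - by rewrite (ler_pdivrMl _ _ N0) mulr1 ler_nat.
  - move=> x _ /andP [lx xh]; rewrite /bset /=.
    by rewrite -(ler_pdivrMl _ _ M0) lx orbT -(ltr_pdivlMl _ _ N0) xh.
  move=> x /andP [x0 x1]; rewrite /bset /= => /andP [H1 H2]; apply/andP; split.
    move: H1; case: eqP => [->|_] /= H1; first by rewrite mulr0.
    by rewrite (ler_pdivrMl _ _ M0).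
  by rewrite (ler_pdivlMl _ _ N0) ltW.
case: (boolP ((v == 0%N) || (n <= v)%N)) => vn0.
  rewrite g2_pre_f0 // preimage_set0 measure0.
  by move: vn0 => /orP [/eqP ->|]; [rewrite mul0r | lia].
have v1 : (1 <= v)%N by lia.
rewrite g2_pre_f //; last by lia.
rewrite unif_Leb //; last exact: meas_bset.
have vM : (v%:R : R) <= n.-1%:R by rewrite ler_nat; lia.
rewrite (@Leb_squeeze _ _ ((n%:R)^-1 * v%:R) ((n.-1%:R)^-1 * v%:R)).
- congr EFin; rewrite M; field.
  by rewrite -M !gt_eqF.
- exact: meas_bset.
- by rewrite mulr_ge0 // invr_ge0 ltW.
- rewrite le_divs //; move: vM; rewrite M => vM; nra.
- by rewrite (ler_pdivrMl _ _ M0) mulr1.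
- move=> x _ /andP [lx xh]; rewrite /bset /=.
  by rewrite -(ler_pdivrMl _ _ N0) lx -(ltr_pdivlMl _ _ M0) xh orbT.
move=> x /andP [x0 x1]; rewrite /bset /= => /andP [H1 H2]; apply/andP; split.
  by rewrite (ler_pdivrMl _ _ N0).
move: H2; case: eqP => [->|_] /= H2.
  by rewrite mulVf ?gt_eqF.
by rewrite (ler_pdivlMl _ _ M0) ltW.
Qed.



Lemma meas_piece (I0 : eqType) (s : seq I0) (g : R -> I0) k (X : T -> R)
  (Xi : I0 -> T -> R) :
  (forall x, g x \in s) -> (forall i, measurable (g @^-1` [set i])) ->
  (forall w, X w = Xi (g (U k w)) w) ->
  (forall i, i \in s -> measurable_fun setT (Xi i)) ->
  measurable_fun setT X.
Proof.
move=> gs mg XE mXi _ Y mY; rewrite setTI.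
have -> : X @^-1` Y = \big[setU/set0]_(i <- s)
    ((U k @^-1` (g @^-1` [set i])) `&` (Xi i @^-1` Y)).
  apply/seteqP; split => w.
    move=> Yw; apply/bigsetU_seqP; exists (g (U k w)); split => //.
    by split => //=; rewrite -XE.
  by move=> /bigsetU_seqP [i [si [/= gi Yi]]]; rewrite /= XE gi.
rewrite big_seq; apply: bigsetU_measurable => i si.
apply: measurableI; first exact: measurable_funPTI.
by have := mXi i si measurableT Y mY; rewrite setTI.
Qed.

Definition Cr m n k : T -> R := fun w => Cqs m n (fun i => U i w) k.

Lemma Cr_ge0 m n k w : (1 <= m)%N -> 0 <= Cr m n k w.
Proof. by move=> m1; apply: Cqs_ge0. Qed.

Lemma Cr_good m n k : (1 <= m)%N -> Good k (4 * n%:R) (Cr m n k).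
Proof.
elim/ltn_ind: n m k => n IH m k m1.
case: (ltnP n m) => mn.
  have -> : Cr m n k = fun _ => 0 by apply/funext => w; rewrite /Cr Cqs_small.
  apply: (@Good_mono _ 0); [by rewrite mulr_ge0 | exact: Good_const].
have n1 : (1 <= n)%N by apply: leq_trans mn.
pose Xi v := fun w => (n%:R - 1)
  + (if (m <= v)%N then Cr m v k.+1 w else 0)
  + (if (v < m.-1)%N then Cr (m.-1 - v) (n.-1 - v) k.+1 w else 0).
pose b v : R := (n%:R - 1) + (if (m <= v)%N then 4 * v%:R else 0)
  + (if (v < m.-1)%N then 4 * (n%:R - 1 - v%:R) else 0).
have XE : forall w, Cr m n k w = Xi (Vf n (U k w)) w.
  move=> w; rewrite /Cr Cqs_unfold // /Xi; case: (leqP m (Vf n (U k w))) => Vm //.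
  by rewrite Cqs_small.
have GXi : forall v, v \in index_iota 0 n -> Good k.+1 (b v) (Xi v).
  move=> v; rewrite mem_index_iota => /andP [_ vn].
  apply: Good_add; first apply: Good_add.
  - by apply: Good_const; rewrite subr_ge0 ler1n.
  - case: ifP => _; first exact: IH.
    exact: Good_const.
  - case: ifP => vm; last exact: Good_const.
    have -> : 4 * (n%:R - 1 - v%:R) = 4 * (n.-1 - v)%:R :> R.
      by rewrite natrB ?natr_pred //; lia.
    apply: IH; lia.
have gs : forall x : R, Vf n x \in index_iota 0 n.
  move=> x; rewrite mem_index_iota /=; have := Vf_le_n n x; lia.
have mX : measurable_fun setT (Cr m n k).
  apply: (@meas_piece _ _ _ k _ Xi gs _ XE) => [v|v vs]; first exact: Vf_meas.
  by case: (GXi v vs).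
have G := @Good_part _ (index_iota 0 n) (Vf n) k (Cr m n k) Xi
  (fun _ => (n%:R)^-1) b (iota_uniq _ _) gs (fun v => @Vf_meas R n v n1).
apply: Good_mono (G _ mX _ _ GXi).
- exact: num1.
- move=> v; rewrite mem_index_iota => /andP [_ vn]; exact: P_Vf.
- by move=> w; exact: Cr_ge0.
- by move=> w; rewrite XE.
Qed.


Definition XiD (u : nat -> R) (j n k : nat) (i : nat * bool) : R :=
  if i.2 then 1 + (if (i.1 < j.-1)%N then
      `|Cqs (j.-1 - i.1) (n.-1 - i.1) u k - Cqs (j.-1 - i.1) (n.-1 - i.1).-1 u k| else 0)
  else 1 + (if (j.+1 <= i.1)%N then `|Cqs j i.1 u k - Cqs j i.1.-1 u k|
            else if i.1 == j then Cqs j j u k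
            else if i.1 == j.-1 then Cqs 1 (n - j) u k
            else Cqs (j.-1 - i.1) (n.-1 - i.1) u k + Cqs (j - i.1) (n.-1 - i.1) u k).

Lemma normD_facts (x : R) : x <= `|x| /\ - x <= `|x|.
Proof. by split; [exact: ler_norm | rewrite -normrN; exact: ler_norm]. Qed.

Lemma ptA (u : nat -> R) j n k : (1 <= j)%N -> (j.+1 <= n)%N ->
  `|Cqs j n u k - Cqs j n.-1 u k| <= XiD u j n k.+1 (g2 n (u k)).
Proof.
move=> j1 jn.
have n1 : (1 <= n)%N by lia.
rewrite (Cqs_unfold j n) //; last by lia.
rewrite (Cqs_unfold j n.-1) //; last by lia.
have NM : (n.-1%:R : R) = n%:R - 1 by rewrite -subn1 natrB.
rewrite NM /g2 /XiD /=.
have n2 : (2 <= n)%N by lia.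
have /andP [hb ha] := @Vf_pair R n (u k) n2.
set a := Vf n (u k); set b := Vf n.-1 (u k).
have g0 : forall m n' k', (1 <= m)%N -> 0 <= Cqs m n' u k' by move=> *; exact: Cqs_ge0.
case: eqP => [ba|nba] /=.
  rewrite ba; case: ifP => aj.
    have -> : (n.-1.-1 - a = (n.-1 - a).-1)%N by lia.
    set C1 := Cqs _ (n.-1 - a) u k.+1; set C2 := Cqs _ (n.-1 - a).-1 u k.+1.
    have [f1 f2] := normD_facts (C1 - C2).
    rewrite ler_norml; apply/andP; split; lra.
  rewrite ler_norml; apply/andP; split; lra.
have eb : b = a.-1 by lia.
have a1 : (1 <= a)%N by lia.
rewrite eb.
case: (leqP j.+1 a) => ja.
  have -> : (a < j.-1)%N = false by lia.
  have -> : (a.-1 < j.-1)%N = false by lia.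
  set C1 := Cqs j a u k.+1; set C2 := Cqs j a.-1 u k.+1.
  have [f1 f2] := normD_facts (C1 - C2).
  rewrite ler_norml; apply/andP; split; lra.
case: eqP => [aj|naj].
  rewrite aj ltnn.
  have -> : (j < j.-1)%N = false by lia.
  rewrite /=.
  rewrite (Cqs_small j (j.-1)); last by lia.
  have := g0 j j k.+1 j1.
  set C1 := Cqs j j u k.+1 => c1.
  rewrite ler_norml; apply/andP; split; lra.
case: eqP => [aj1|naj1].
  rewrite aj1.
  have j2 : (2 <= j)%N by lia.
  have -> : (j.-1 < j.-1)%N = false by lia.
  have -> : (j.-1.-1 < j.-1)%N = true by lia.
  rewrite (Cqs_small j (j.-1)); last by lia.
  rewrite (Cqs_small j (j.-1.-1)); last by lia.
  have -> : (j.-1 - j.-1.-1 = 1)%N by lia.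
  have -> : (n.-1.-1 - j.-1.-1 = n - j)%N by lia.
  have := g0 1%N (n - j)%N k.+1 (leqnn 1).
  set C1 := Cqs 1 (n - j) u k.+1 => c1.
  rewrite ler_norml; apply/andP; split; lra.
have -> : (a < j.-1)%N = true by lia.
have -> : (a.-1 < j.-1)%N = true by lia.
rewrite (Cqs_small j (a)); last by lia.
rewrite (Cqs_small j (a.-1)); last by lia.
have -> : (j.-1 - a.-1 = j - a)%N by lia.
have -> : (n.-1.-1 - a.-1 = n.-1 - a)%N by lia.
have := g0 (j.-1 - a)%N (n.-1 - a)%N k.+1 ltac:(lia).
have := g0 (j - a)%N (n.-1 - a)%N k.+1 ltac:(lia).
set C1 := Cqs (j.-1 - a) _ u k.+1; set C2 := Cqs (j - a) _ u k.+1 => c2 c1.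
rewrite ler_norml; apply/andP; split; lra.
Qed.


Lemma mAbs j n k : (1 <= j)%N ->
  measurable_fun setT (fun w => `|Cr j n k w - Cr j n.-1 k w|).
Proof.
move=> j1; apply: measurableT_comp; first exact: measurable_realfun.normr_measurable.
apply: measurable_realfun.measurable_funB.
- by have [] := Cr_good j n k j1.
- by have [] := Cr_good j n.-1 k j1.
Qed.

Lemma A_good j n k : (1 <= j)%N -> (1 <= n)%N ->
  Good k (2 + 16 * j%:R) (fun w => `|Cr j n k w - Cr j n.-1 k w|).
Proof.
elim/ltn_ind: n j k => n IH j k j1 n1.
case: (ltnP n j) => nj.
  have -> : (fun w => `|Cr j n k w - Cr j n.-1 k w|) = fun _ => 0.
    apply/funext => w; rewrite /Cr (Cqs_small j n) // (Cqs_small j n.-1).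
      by rewrite subrr normr0.
    lia.
  apply: (@Good_mono _ 0); last exact: Good_const.
  by rewrite addr_ge0 // mulr_ge0.
case: (eqVneq n j) => [nj'|nj'].
  apply: (@Good_le _ _ _ (Cr j n k)).
  - exact: mAbs.
  - by move=> w.
  - move=> w; rewrite /Cr (Cqs_small j n.-1) ?subr0; last by lia.
    by rewrite ger0_norm //; exact: Cqs_ge0.
  apply: (@Good_mono _ (4 * n%:R)); last exact: Cr_good.
  by rewrite nj'; have := ler0n R j; lra.
have jn : (j.+1 <= n)%N by lia.
have n2 : (2 <= n)%N by lia.
pose s2 := [seq (v, e) | v <- index_iota 0 n, e <- [:: true; false]].
pose Xi (i : nat * bool) := fun w => XiD (fun i => U i w) j n k.+1 i.
have us : uniq s2.
  apply: allpairs_uniq => //; first exact: iota_uniq.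
  by move=> [? ?] [? ?] _ _ [] -> ->.
have gs : forall x : R, g2 n x \in s2.
  move=> x; rewrite /g2; apply: allpairs_f.
    rewrite mem_index_iota /=; have := Vf_le_n n x; lia.
  by case: (_ == _).
have s2n : forall i, i \in s2 -> (i.1 < n)%N.
  move=> i /allpairsP [[v e] [vs _ ->]] /=.
  by move: vs; rewrite mem_index_iota.
have GXi : forall i, i \in s2 -> Good k.+1 (b2 n j i) (Xi i).
  move=> [v e] /s2n /= vn; rewrite /b2 /Xi /XiD /=.
  case: e => /=.
    apply: Good_add; first exact: Good_const.
    case: ifP => h; last exact: Good_const.
    apply: IH; lia.
  apply: Good_add; first exact: Good_const.
  case: ifP => h1; first by apply: IH; lia.
  case: eqP => [_|h2]; first exact: Cr_good.
  case: eqP => [h3|h3]; first exact: Cr_good.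
  apply: (@Good_mono _ (4 * (n.-1 - v)%:R + 4 * (n.-1 - v)%:R)).
    by rewrite -mulrDl; lra.
  by apply: Good_add; apply: Cr_good; lia.
have G := @Good_part _ s2 (g2 n) k _ Xi (p2 n) (b2 n j) us gs
  (fun i => @g2_meas R n i n2).
apply: Good_mono (G _ _ (mAbs j n k j1) _ _ GXi).
- rewrite big_allpairs; under eq_bigr do rewrite big_cons big_cons big_nil.
  exact: num2.
- move=> i /s2n; exact: P_g2.
- by move=> w.
- by move=> w; exact: ptA.
Qed.


Lemma final_bound m p : (2 <= m)%N -> (1 <= p)%N ->
  (\int[P]_w `|Cqs m p (fun i => U i w) 0 - Cqs m p.-1 (fun i => U i w) 0|%:E
     <= (2 + 16 * m%:R)%:E)%E.
Proof.
move=> m2 p1.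
have [_ _ H] := @A_good m p 0 (ltnW m2) p1.
have := H [::] (fun _ => setT) isT (fun _ => measurableT) isT.
have -> : Ev [::] (fun _ => setT) = setT.
  by apply/seteqP; split => // w _ i.
by rewrite probability_setT mul1e.
Qed.

End Main.

Theorem lemma2p6 (d : measure_display) (T : measurableType d) (R : realType)
  (P : probability T R) (U : nat -> {RV P >-> R}) :
  mutually_independent U -> (forall i, uniform01 (U i)) ->
  forall m p : nat, (2 <= m)%N -> (1 <= p)%N ->
  (\int[P]_w `|Cqs m p (fun i => U i w) 0 - Cqs m p.-1 (fun i => U i w) 0|%:E
     <= (2 + 16 * m%:R)%:E)%E.
Proof.
move=> indep unif m p m2 p1.
exact: final_bound.
Qed.
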